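(* Let $Q$ be a quadrilateral in $K^2$. (1) The midpoint $\mathrm{mid}_Q(\ell)$ is finite (not at infinity) for all bisectors $\ell$ of $Q$. (2) A line $\ell$ passing through a vertex of $Q$ bisects $Q$ if and only if it is a side of $Q$ or a diagonal of $Q$. (3) Two distinct parallel lines are bisectors of $Q$ if and only if these lines are parallel to a pair of parallel sides of $Q$ or to the diagonals of $Q$ when these are parallel. (4) All lines parallel to a pair of parallel sides of $Q$, or to the diagonals of $Q$ when these are parallel, bisect $Q$.
   Context: $K$ is a field of characteristic $\neq 2$; we work in $K^2$ inside the projective plane. A quadrilateral $Q=ABA'B'$ consists of four distinct lines $A,B,A',B'$ (sides), not all through one point, with adjacent sides ($A,B$; $B,A'$; $A',B'$; $B',A$) not parallel; opposite sides ($A,A'$; $B,B'$) may be parallel. Vertices: $A\cap B$, $B\cap A'$, $A'\cap B'$, $B'\cap A$ (two may coincide if three sides are concurrent). Diagonals: the lines through nonadjacent vertices. Here ''parallel to'' a line includes being equal to it. A line $\ell$ crosses a pair $\{\ell_1,\ell_2\}$ if it is distinct from both and not parallel to both; $\mathrm{mid}_{\{\ell_1,\ell_2\}}(\ell)$ is the midpoint of the points where $\ell$ meets $\ell_1,\ell_2$, defined to be the point at infinity of $\ell$ if one of these points is at infinity. $\ell$ bisects $Q$ (is a bisector of $Q$) if $\mathrm{mid}_{\mathsf P}(\ell)$ is the same for all pairs $\mathsf P$ among $\{A,A'\},\{B,B'\}$ that $\ell$ crosses; this common point is $\mathrm{mid}_Q(\ell)$, the midpoint of the bisector. *)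

(* Defs.v *)
From mathcomp Require Import all_boot all_algebra.
Set Implicit Arguments. Unset Strict Implicit. Unset Printing Implicit Defensive.
Import GRing.Theory.
Local Open Scope ring_scope.

Section Plane.
Variable K : fieldType.

Definition pt := (K * K)%type.

Definition is_line (l : pt -> Prop) : Prop :=
  exists a b c : K, (a != 0 \/ b != 0) /\
    forall p : pt, l p <-> a * p.1 + b * p.2 = c.

Definition eql (l m : pt -> Prop) : Prop := forall p, l p <-> m p.

Definition par (l m : pt -> Prop) : Prop :=
  eql l m \/ (forall p, ~ (l p /\ m p)).

(* Quadrilateral Q = A B A' B' (sides in this cyclic order) *)
Definition quadrilateral (A B A' B' : pt -> Prop) : Prop :=
  [/\ is_line A, is_line B, is_line A' & is_line B'] /\
  (~ eql A B /\ ~ eql A A' /\ ~ eql A B' /\ ~ eql B A' /\ ~ eql B B' /\ ~ eql A' B') /\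
  ~ (exists p, A p /\ B p /\ A' p /\ B' p) /\
  [/\ ~ par A B, ~ par B A', ~ par A' B' & ~ par B' A].

Definition is_vertex (A B A' B' : pt -> Prop) (p : pt) : Prop :=
  (A p /\ B p) \/ (B p /\ A' p) \/ (A' p /\ B' p) \/ (B' p /\ A p).

Definition is_side (A B A' B' : pt -> Prop) (l : pt -> Prop) : Prop :=
  eql l A \/ eql l B \/ eql l A' \/ eql l B'.

Definition diag1 (A B A' B' : pt -> Prop) (d : pt -> Prop) : Prop :=
  is_line d /\ exists p q, A p /\ B p /\ A' q /\ B' q /\ d p /\ d q.

Definition diag2 (A B A' B' : pt -> Prop) (d : pt -> Prop) : Prop :=
  is_line d /\ exists p q, B p /\ A' p /\ B' q /\ A q /\ d p /\ d q.

Definition is_diagonal (A B A' B' : pt -> Prop) (d : pt -> Prop) : Prop :=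
  diag1 A B A' B' d \/ diag2 A B A' B' d.

Definition crosses (l l1 l2 : pt -> Prop) : Prop :=
  ~ eql l l1 /\ ~ eql l l2 /\ ~ (par l l1 /\ par l l2).

Definition midpt (p q : pt) : pt := ((p.1 + q.1) / 2, (p.2 + q.2) / 2).

(* mid_{l1,l2}(l) = m, where m : option pt; [None] stands for the point at
   infinity of l (the only point at infinity that can occur for a given l),
   [Some p] for the affine point p. *)
Definition mid (l l1 l2 : pt -> Prop) (m : option pt) : Prop :=
  ((par l l1 \/ par l l2) /\ m = None) \/
  (~ par l l1 /\ ~ par l l2 /\
   exists p1 p2, l p1 /\ l1 p1 /\ l p2 /\ l2 p2 /\ m = Some (midpt p1 p2)).

Definition bisects (A B A' B' : pt -> Prop) (l : pt -> Prop) : Prop :=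
  is_line l /\
  (crosses l A A' -> crosses l B B' ->
   forall m1 m2, mid l A A' m1 -> mid l B B' m2 -> m1 = m2).

Definition midQ (A B A' B' : pt -> Prop) (l : pt -> Prop) (m : option pt) : Prop :=
  bisects A B A' B' l /\
  ((crosses l A A' /\ mid l A A' m) \/ (crosses l B B' /\ mid l B B' m)).

Definition special_dir (A B A' B' : pt -> Prop) (l : pt -> Prop) : Prop :=
  (par A A' /\ par l A) \/ (par B B' /\ par l B) \/
  (exists d1 d2, diag1 A B A' B' d1 /\ diag2 A B A' B' d2 /\ par d1 d2 /\ par l d1).

End Plane.

(* Main.v *)
Require Import Defs.
From mathcomp Require Import all_boot all_algebra.
From mathcomp Require Import all_boot all_algebra ring.
From Stdlib Require Import Classical.
Set Implicit Arguments. Unset Strict Implicit. Unset Printing Implicit Defensive.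
Import GRing.Theory.
Local Open Scope ring_scope.

Lemma prop_alg (K : fieldType) (a1 b1 a2 b2 x y : K) :
  a1 * b2 - a2 * b1 = 0 -> (a1 != 0 \/ b1 != 0) -> a1 * x + b1 * y = 0 ->
  a2 * x + b2 * y = 0.
Proof.
move=> D nz e.
case: nz => nz.
  have : a1 * (a2 * x + b2 * y) = a2 * (a1 * x + b1 * y) + y * (a1 * b2 - a2 * b1) by ring.
  rewrite e D mulr0 mulr0 addr0 => /eqP; rewrite mulf_eq0 (negbTE nz) /= => /eqP //.
have : b1 * (a2 * x + b2 * y) = b2 * (a1 * x + b1 * y) - x * (a1 * b2 - a2 * b1) by ring.
rewrite e D mulr0 mulr0 subr0 => /eqP; rewrite mulf_eq0 (negbTE nz) /= => /eqP //.
Qed.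

Lemma det0_alg (K : fieldType) (a1 b1 a2 b2 x y : K) :
  a1 * x + b1 * y = 0 -> a2 * x + b2 * y = 0 -> (x != 0 \/ y != 0) ->
  a1 * b2 - a2 * b1 = 0.
Proof.
move=> e1 e2 nz.
case: nz => nz.
  have : x * (a1 * b2 - a2 * b1) = b2 * (a1 * x + b1 * y) - b1 * (a2 * x + b2 * y) by ring.
  rewrite e1 e2 !mulr0 subr0 => /eqP; rewrite mulf_eq0 (negbTE nz) /= => /eqP //.
have : y * (a1 * b2 - a2 * b1) = a1 * (a2 * x + b2 * y) - a2 * (a1 * x + b1 * y) by ring.
rewrite e1 e2 !mulr0 subr0 => /eqP; rewrite mulf_eq0 (negbTE nz) /= => /eqP //.
Qed.

Lemma trans_alg (K : fieldType) (a1 b1 a2 b2 a3 b3 : K) :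
  a1 * b2 - a2 * b1 = 0 -> a2 * b3 - a3 * b2 = 0 -> (a2 != 0 \/ b2 != 0) ->
  a1 * b3 - a3 * b1 = 0.
Proof.
move=> e1 e2 nz.
case: nz => nz.
  have : a2 * (a1 * b3 - a3 * b1) = a1 * (a2 * b3 - a3 * b2) + a3 * (a1 * b2 - a2 * b1) by ring.
  rewrite e1 e2 !mulr0 addr0 => /eqP; rewrite mulf_eq0 (negbTE nz) /= => /eqP //.
have : b2 * (a1 * b3 - a3 * b1) = b3 * (a1 * b2 - a2 * b1) + b1 * (a2 * b3 - a3 * b2) by ring.
rewrite e1 e2 !mulr0 addr0 => /eqP; rewrite mulf_eq0 (negbTE nz) /= => /eqP //.
Qed.

Lemma par_crit (K : fieldType) (l m : pt K -> Prop) a1 b1 c1 a2 b2 c2 :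
  (a1 != 0 \/ b1 != 0) -> (forall p, l p <-> a1 * p.1 + b1 * p.2 = c1) ->
  (a2 != 0 \/ b2 != 0) -> (forall p, m p <-> a2 * p.1 + b2 * p.2 = c2) ->
  (par l m <-> a1 * b2 - a2 * b1 = 0).
Proof.
move=> nz1 hl nz2 hm; split.
  move=> hp; apply/eqP; apply/negP => /negP D.
  have [p0 [l0 m0]] : exists p0, l p0 /\ m p0.
    exists ((c1 * b2 - c2 * b1) / (a1 * b2 - a2 * b1),
                     (a1 * c2 - a2 * c1) / (a1 * b2 - a2 * b1)).
    by split; [apply/hl | apply/hm]; rewrite /=; field.
  case: hp => [he | hd]; last by apply: (hd p0).
  have l1 : l (p0.1 - b1, p0.2 + a1) by apply/hl; rewrite /=; move/hl: l0 => <-; ring.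
  move/he/hm: l1; move/hm: m0 => e0 e1.
  move/eqP: D; apply; rewrite -(subrr c2); rewrite -{1}e1 -e0 /=; ring.
move=> D.
case: (classic (exists p, l p /\ m p)) => [[p [lp mp]] | nex]; last first.
  by right => p hp; apply: nex; exists p.
left => q; move/hl: lp => ep; move/hm: mp => eq'; split.
  move/hl => eq1; apply/hm; apply/eqP; rewrite -subr_eq0; apply/eqP.
  have := @prop_alg _ a1 b1 a2 b2 (q.1 - p.1) (q.2 - p.2) D nz1.
  rewrite -eq'. move=> H; rewrite -H; first ring.
  by rewrite -(subrr c1) -{1}eq1 -ep; ring.
move/hm => eq1; apply/hl; apply/eqP; rewrite -subr_eq0; apply/eqP.
have D' : a2 * b1 - a1 * b2 = 0 by rewrite -opprB D oppr0.
have := @prop_alg _ a2 b2 a1 b1 (q.1 - p.1) (q.2 - p.2) D' nz2.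
rewrite -ep. move=> H; rewrite -H; first ring.
by rewrite -(subrr c2) -{1}eq1 -eq'; ring.
Qed.

Definition lin (K : fieldType) (a b c : K) : pt K -> Prop := fun p => a * p.1 + b * p.2 = c.

Lemma lin_line (K : fieldType) (a b c : K) : (a != 0 \/ b != 0) -> is_line (lin a b c).
Proof. by move=> nz; exists a, b, c; split. Qed.

Lemma line_pt (K : fieldType) (l : pt K -> Prop) : is_line l -> exists p, l p.
Proof.
case=> a [b [c [[nz|nz] h]]].
  by exists (c / a, 0); apply/h => /=; field.
by exists (0, c / b); apply/h => /=; field.
Qed.

Lemma eql_sym (K : fieldType) (l m : pt K -> Prop) : eql l m -> eql m l.
Proof. by move=> h p; split => /h. Qed.

Lemma eql_trans (K : fieldType) (l m n : pt K -> Prop) : eql l m -> eql m n -> eql l n.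
Proof. by move=> h1 h2 p; split => [/h1/h2|/h2/h1]. Qed.

Lemma eql_par (K : fieldType) (l m : pt K -> Prop) : eql l m -> par l m.
Proof. by left. Qed.

Lemma par_refl (K : fieldType) (l : pt K -> Prop) : par l l.
Proof. by left. Qed.

Lemma par_sym (K : fieldType) (l m : pt K -> Prop) : par l m -> par m l.
Proof. case=> [h|h]; [left; exact: eql_sym | right => p [mp lp]; exact: (h p (conj lp mp))]. Qed.

Lemma par_trans (K : fieldType) (l m n : pt K -> Prop) :
  is_line l -> is_line m -> is_line n -> par l m -> par m n -> par l n.
Proof.
case=> a1 [b1 [c1 [nz1 h1]]] [a2 [b2 [c2 [nz2 h2']]]] [a3 [b3 [c3 [nz3 h3]]]].
rewrite (par_crit nz1 h1 nz2 h2') (par_crit nz2 h2' nz3 h3) (par_crit nz1 h1 nz3 h3).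
by move=> e1 e2; apply: trans_alg e1 e2 nz2.
Qed.

Lemma par_eql (K : fieldType) (l m : pt K -> Prop) p : par l m -> l p -> m p -> eql l m.
Proof. by case=> // h lp mp; case: (h p). Qed.

Lemma pt_neq (K : fieldType) (p q : pt K) : p <> q -> p.1 - q.1 != 0 \/ p.2 - q.2 != 0.
Proof.
case: p q => [x1 y1] [x2 y2] /= ne.
case: (eqVneq x1 x2) => [e1|n1]; last by left; rewrite subr_eq0.
case: (eqVneq y1 y2) => [e2|n2]; last by right; rewrite subr_eq0.
by case: ne; rewrite e1 e2.
Qed.

Lemma two_pts (K : fieldType) (l m : pt K -> Prop) p q :
  is_line l -> is_line m -> l p -> m p -> l q -> m q -> p <> q -> eql l m.
Proof.
move=> Ll Lm lp mp lq mq ne; apply: (par_eql (p := p)) => //.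
move: Ll Lm lp mp lq mq => [a1 [b1 [c1 [nz1 h1]]]] [a2 [b2 [c2 [nz2 h2']]]].
rewrite (par_crit nz1 h1 nz2 h2') => /h1 e1 /h2' e2 /h1 e3 /h2' e4.
apply: (det0_alg (x := p.1 - q.1) (y := p.2 - q.2)); last exact: pt_neq.
  by rewrite -(subrr c1) -{1}e1 -e3; ring.
by rewrite -(subrr c2) -{1}e2 -e4; ring.
Qed.

Lemma uniq_meet (K : fieldType) (l m : pt K -> Prop) p q :
  is_line l -> is_line m -> ~ eql l m -> l p -> m p -> l q -> m q -> p = q.
Proof.
move=> Ll Lm ne lp mp lq mq; case: (classic (p = q)) => // ne'.
by case: ne; apply: two_pts ne'.
Qed.

Lemma uniq_meet' (K : fieldType) (l m : pt K -> Prop) p q :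
  is_line l -> is_line m -> ~ par l m -> l p -> m p -> l q -> m q -> p = q.
Proof. by move=> Ll Lm np; apply: uniq_meet => // /eql_par. Qed.

Lemma meet (K : fieldType) (l m : pt K -> Prop) : ~ par l m -> exists p, l p /\ m p.
Proof.
move=> np; apply: NNPP => nex; apply: np; right => p hp; apply: nex; by exists p.
Qed.

Lemma npar_neql (K : fieldType) (l m : pt K -> Prop) : ~ par l m -> ~ eql l m.
Proof. by move=> np /eql_par. Qed.

Lemma par_height (K : fieldType) (l m : pt K -> Prop) a b c p q :
  (a != 0 \/ b != 0) -> (forall p, l p <-> a * p.1 + b * p.2 = c) ->
  is_line m -> par l m -> m p -> m q -> a * p.1 + b * p.2 = a * q.1 + b * q.2.
Proof.
move=> nz h [a2 [b2 [c2 [nz2 h2']]]]; rewrite (par_crit nz h nz2 h2') => D /h2' e1 /h2' e2.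
have D' : a2 * b - a * b2 = 0 by rewrite -opprB D oppr0.
have := @prop_alg _ a2 b2 a b (p.1 - q.1) (p.2 - q.2) D' nz2.
move=> H; apply/eqP; rewrite -subr_eq0; apply/eqP; rewrite -H; first ring.
by rewrite -(subrr c2) -{1}e1 -e2; ring.
Qed.

Lemma height_par (K : fieldType) (l m : pt K -> Prop) a b c p q :
  (a != 0 \/ b != 0) -> (forall p, l p <-> a * p.1 + b * p.2 = c) ->
  is_line m -> m p -> m q -> p <> q -> a * p.1 + b * p.2 = a * q.1 + b * q.2 -> par l m.
Proof.
move=> nz h [a2 [b2 [c2 [nz2 h2']]]] /h2' e1 /h2' e2 ne e.
rewrite (par_crit nz h nz2 h2').
apply: (det0_alg (x := p.1 - q.1) (y := p.2 - q.2)); last exact: pt_neq.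
  by rewrite -(subrr (a * q.1 + b * q.2)) -{1}e; ring.
by rewrite -(subrr c2) -{1}e1 -e2; ring.
Qed.

Lemma par_lin (K : fieldType) (l : pt K -> Prop) a b c k :
  (a != 0 \/ b != 0) -> (forall p, l p <-> a * p.1 + b * p.2 = c) -> par l (lin a b k).
Proof. by move=> nz h; rewrite (par_crit nz h nz (fun p => iff_refl _)) subrr. Qed.

Definition aff (K : fieldType) (p q : pt K) (t : K) : pt K :=
  (p.1 + t * (q.1 - p.1), p.2 + t * (q.2 - p.2)).

Lemma aff_on (K : fieldType) (m : pt K -> Prop) p q t :
  is_line m -> m p -> m q -> m (aff p q t).
Proof.
case=> [a [b [c [nz h]]]] /h e1 /h e2; apply/h; rewrite /aff /=.
have -> : a * (p.1 + t * (q.1 - p.1)) + b * (p.2 + t * (q.2 - p.2)) =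
  (a * p.1 + b * p.2) + t * ((a * q.1 + b * q.2) - (a * p.1 + b * p.2)) by ring.
by rewrite e1 e2 subrr mulr0 addr0.
Qed.

Lemma midpt_eq (K : fieldType) (h2 : (2 : K) != 0) (p q r s : pt K) :
  midpt p q = midpt r s -> p.1 + q.1 = r.1 + s.1 /\ p.2 + q.2 = r.2 + s.2.
Proof.
rewrite /midpt => -[e1 e2]; split.
  by have := congr1 (fun x => x * 2) e1; rewrite !mulfVK.
by have := congr1 (fun x => x * 2) e2; rewrite !mulfVK.
Qed.

Lemma midpt_C (K : fieldType) (p q : pt K) : midpt p q = midpt q p.
Proof. by rewrite /midpt addrC [q.2 + _]addrC. Qed.

Lemma mid_none (K : fieldType) (l X Y : pt K -> Prop) m :
  par l X \/ par l Y -> mid l X Y m -> m = None.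
Proof. by move=> hp [[_ ->] // | [nX [nY _]]]; case: hp. Qed.

Lemma mid_at (K : fieldType) (l X Y : pt K -> Prop) x y m :
  is_line l -> is_line X -> is_line Y -> ~ eql l X -> ~ eql l Y ->
  l x -> X x -> l y -> Y y -> mid l X Y m -> m = Some (midpt x y).
Proof.
move=> Ll LX LY nX nY lx Xx ly Yy [[[pX|pY] _] | [_ [_ [p1 [p2 [l1 [X1 [l2 [Y2 ->]]]]]]]]].
- by case: nX; apply: par_eql pX lx Xx.
- by case: nY; apply: par_eql pY ly Yy.
by rewrite (uniq_meet Ll LX nX l1 X1 lx Xx) (uniq_meet Ll LY nY l2 Y2 ly Yy).
Qed.

Lemma mid_exact (K : fieldType) (l X Y : pt K -> Prop) x y :
  ~ par l X -> ~ par l Y -> l x -> X x -> l y -> Y y -> mid l X Y (Some (midpt x y)).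
Proof. by move=> nX nY lx Xx ly Yy; right; split => //; split => //; exists x, y. Qed.

Lemma mid_some (K : fieldType) (l X Y : pt K -> Prop) :
  ~ par l X -> ~ par l Y -> exists p, mid l X Y (Some p).
Proof.
move=> nX nY; have [x [lx Xx]] := meet nX; have [y [ly Yy]] := meet nY.
by exists (midpt x y); apply: mid_exact.
Qed.

Lemma crosses_npar (K : fieldType) (l X Y : pt K -> Prop) :
  ~ par l X -> ~ par l Y -> crosses l X Y.
Proof. by move=> nX nY; split; [exact: npar_neql|split; [exact: npar_neql| case]]. Qed.

Lemma mid_sym (K : fieldType) (l X Y : pt K -> Prop) m : mid l X Y m -> mid l Y X m.
Proof.
case=> [[h ->]|[nX [nY [p1 [p2 [l1 [X1 [l2 [Y2 ->]]]]]]]]].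
  by left; split => //; case: h; auto.
by rewrite midpt_C; apply: mid_exact.
Qed.

Lemma crosses_sym (K : fieldType) (l X Y : pt K -> Prop) : crosses l X Y -> crosses l Y X.
Proof. by case=> a [b c]; split => //; split => // -[]; auto. Qed.

Lemma bis_swapA (K : fieldType) (A B A' B' l : pt K -> Prop) :
  bisects A B A' B' l -> bisects A' B A B' l.
Proof.
case=> Ll h; split => // cA cB m1 m2 /mid_sym h1 h2.
by apply: h => //; apply: crosses_sym.
Qed.

Lemma bis_swapB (K : fieldType) (A B A' B' l : pt K -> Prop) :
  bisects A B A' B' l -> bisects A B' A' B l.
Proof.
case=> Ll h; split => // cA cB m1 m2 h1 /mid_sym h2.
by apply: h => //; apply: crosses_sym.
Qed.

Lemma adj_npar (K : fieldType) (l X Z : pt K -> Prop) :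
  is_line l -> is_line X -> is_line Z -> par l X -> ~ par X Z -> ~ par l Z.
Proof. move=> Ll LX LZ pX nXZ pZ; apply: nXZ; apply: par_trans pZ => //; exact: par_sym. Qed.

Lemma vertex_gen (K : fieldType) (h2 : (2 : K) != 0) (l X Y Z W : pt K -> Prop) v :
  is_line l -> is_line X -> is_line Y -> is_line Z -> is_line W ->
  l v -> X v -> Z v -> ~ eql l X -> ~ eql l Z -> ~ eql l Y -> ~ eql l W -> ~ par Y W ->
  bisects X Z Y W l -> exists q, Y q /\ W q /\ l q.
Proof.
move=> Ll LX LY LZ LW lv Xv Zv nX nZ nY nW nYW [_ hb].
have npX : ~ par l X by move=> pX; apply: nX; apply: par_eql pX lv Xv.
have npZ : ~ par l Z by move=> pZ; apply: nZ; apply: par_eql pZ lv Zv.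
have cX : crosses l X Y by split => //; split => // -[].
have cZ : crosses l Z W by split => //; split => // -[].
case: (classic (par l Y)) => pY.
  have npW : ~ par l W by apply: adj_npar pY nYW.
  have [p hp] := mid_some npZ npW.
  by have := hb cX cZ None (Some p) (or_introl (conj (or_intror pY) erefl)) hp.
case: (classic (par l W)) => pW.
  have npY : ~ par l Y by move=> pY'; apply: (adj_npar Ll LW LY pW) => //; apply/par_sym.
  have [p hp] := mid_some npX npY.
  by have := hb cX cZ (Some p) None hp (or_introl (conj (or_intror pW) erefl)).
have [q [lq Yq]] := meet pY; have [r [lr Wr]] := meet pW.
have := hb cX cZ _ _ (mid_exact npX pY lv Xv lq Yq) (mid_exact npZ pW lv Zv lr Wr).
move=> /(congr1 (fun o => if o is Some z then z else v)) /= /(midpt_eq h2) [e1 e2]; exists q; split => //.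
have -> : q = r by move: e1 e2; case: q {lq Yq} => q1 q2; case: r {lr Wr} => r1 r2 /= /addrI -> /addrI ->.
by [].
Qed.

Lemma diag_bis (K : fieldType) (l X Y Z W : pt K -> Prop) p q :
  is_line l -> is_line X -> is_line Y -> is_line Z -> is_line W ->
  X p -> Z p -> l p -> Y q -> W q -> l q -> bisects X Z Y W l.
Proof.
move=> Ll LX LY LZ LW Xp Zp lp Yq Wq lq; split => // [[nX [nY _]] [nZ [nW _]]] m1 m2 h1 h2.
by rewrite (mid_at Ll LX LY nX nY lp Xp lq Yq h1) (mid_at Ll LZ LW nZ nW lp Zp lq Wq h2).
Qed.

Lemma haff (K : fieldType) (a b c1 c2 k : K) (x y : pt K) :
  c1 != c2 -> a * x.1 + b * x.2 = c1 -> a * y.1 + b * y.2 = c2 ->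
  let z := aff x y ((k - c1) / (c2 - c1)) in a * z.1 + b * z.2 = k.
Proof.
move=> ne hx hy /=.
have -> : forall t, a * (x.1 + t * (y.1 - x.1)) + b * (x.2 + t * (y.2 - x.2)) =
  (a * x.1 + b * x.2) + t * ((a * y.1 + b * y.2) - (a * x.1 + b * x.2)) by move=> t; ring.
rewrite hx hy; have ne' : c2 - c1 != 0 by rewrite subr_eq0 eq_sym.
by field.
Qed.

Lemma level_lemma (K : fieldType) (a b c1 c2 k : K) (X Y Z W : pt K -> Prop)
  xX xY xZ xW yX yY yZ yW P :
  (a != 0 \/ b != 0) -> is_line X -> is_line Y -> is_line Z -> is_line W ->
  ~ par X (lin a b k) -> ~ par Z (lin a b k) ->
  X xX -> Y xY -> Z xZ -> W xW -> X yX -> Y yY -> Z yZ -> W yW ->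
  lin a b c1 xX -> lin a b c1 xY -> lin a b c1 xZ -> lin a b c1 xW ->
  lin a b c2 yX -> lin a b c2 yY -> lin a b c2 yZ -> lin a b c2 yW ->
  xX.1 + xY.1 = xZ.1 + xW.1 -> xX.2 + xY.2 = xZ.2 + xW.2 ->
  yX.1 + yY.1 = yZ.1 + yW.1 -> yX.2 + yY.2 = yZ.2 + yW.2 ->
  c1 != c2 -> X P -> Z P -> lin a b k P ->
  exists q, Y q /\ W q /\ lin a b k q.
Proof.
move=> nz LX LY LZ LW npX npZ XxX YxY ZxZ WxW XyX YyY ZyZ WyW hxX hxY hxZ hxW hyX hyY hyZ hyW
  ex1 ex2 ey1 ey2 ne XP ZP hP.
set t := (k - c1) / (c2 - c1).
have LL : is_line (lin a b k) by apply: lin_line.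
have eX : aff xX yX t = P.
  apply: (uniq_meet' LX LL npX) => //; [exact: aff_on | exact: haff].
have eZ : aff xZ yZ t = P.
  apply: (uniq_meet' LZ LL npZ) => //; [exact: aff_on | exact: haff].
have eYW : aff xY yY t = aff xW yW t.
  have e1 : (aff xY yY t).1 - (aff xW yW t).1 =
    (1 - t) * ((xX.1 + xY.1) - (xZ.1 + xW.1)) + t * ((yX.1 + yY.1) - (yZ.1 + yW.1))
    - ((aff xX yX t).1 - (aff xZ yZ t).1) by rewrite /aff /=; ring.
  have e2 : (aff xY yY t).2 - (aff xW yW t).2 =
    (1 - t) * ((xX.2 + xY.2) - (xZ.2 + xW.2)) + t * ((yX.2 + yY.2) - (yZ.2 + yW.2))
    - ((aff xX yX t).2 - (aff xZ yZ t).2) by rewrite /aff /=; ring.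
  rewrite ex1 ex2 ey1 ey2 eX eZ !subrr !mulr0 !addr0 subr0 in e1 e2.
  move/eqP: e1; move/eqP: e2; rewrite !subr_eq0.
  by case: (aff xY yY t) => ? ?; case: (aff xW yW t) => ? ? /= /eqP -> /eqP ->.
exists (aff xY yY t); split; first exact: aff_on.
split; last exact: haff.
by rewrite eYW; apply: aff_on.
Qed.

Lemma diag4 (K : fieldType) (A B A' B' : pt K -> Prop) (hQ : quadrilateral A B A' B') d1 d2 l :
  diag1 A B A' B' d1 -> diag2 A B A' B' d2 -> par d1 d2 -> is_line l -> par l d1 ->
  bisects A B A' B' l.
Proof.
case: hQ => [[LA LB LA' LB'] [[nAB [nAA' [nAB' [nBA' [nBB' nA'B']]]]] [nc [pAB pBA' pA'B' pB'A]]]].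
case=> [Ld1 [P1 [P3 [AP1 [BP1 [A'P3 [B'P3 [d1P1 d1P3]]]]]]]].
case=> [Ld2 [P2 [P4 [BP2 [A'P2 [B'P4 [AP4 [d2P2 d2P4]]]]]]]].
move=> p12 Ll pl1.
have pl2 : par l d2 by apply: par_trans p12.
have sp : forall d S, is_line d -> par l d -> is_line S -> par l S ->
    forall u, S u -> d u -> forall u', d u' -> S u'.
  move=> d S Ld pld LS pS u Su du u' du'.
  have pdS : par d S by apply: (par_trans Ld Ll LS) => //; apply: par_sym.
  have E := par_eql pdS du Su; exact: (proj1 (E u') du').
have nA : ~ par l A.
  move=> pA; have A3 := sp _ _ Ld1 pl1 LA pA _ AP1 d1P1 _ d1P3.
  have A2 := sp _ _ Ld2 pl2 LA pA _ AP4 d2P4 _ d2P2.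
  have e := uniq_meet LA LA' nAA' A2 A'P2 A3 A'P3.
  by apply: nc; exists P2; rewrite {3 4}e.
have nA' : ~ par l A'.
  move=> pA; have A1 := sp _ _ Ld1 pl1 LA' pA _ A'P3 d1P3 _ d1P1.
  have A4 := sp _ _ Ld2 pl2 LA' pA _ A'P2 d2P2 _ d2P4.
  have e := uniq_meet LA LA' nAA' AP1 A1 AP4 A4.
  by apply: nc; exists P1; rewrite {4}e.
have nB : ~ par l B.
  move=> pB; have B3 := sp _ _ Ld1 pl1 LB pB _ BP1 d1P1 _ d1P3.
  have B4 := sp _ _ Ld2 pl2 LB pB _ BP2 d2P2 _ d2P4.
  have e := uniq_meet LB LB' nBB' B3 B'P3 B4 B'P4.
  by apply: nc; exists P3; rewrite {1}e.
have nB' : ~ par l B'.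
  move=> pB; have B1 := sp _ _ Ld1 pl1 LB' pB _ B'P3 d1P3 _ d1P1.
  have B2 := sp _ _ Ld2 pl2 LB' pB _ B'P4 d2P4 _ d2P2.
  have e := uniq_meet LB LB' nBB' BP1 B1 BP2 B2.
  by apply: nc; exists P1; rewrite {3}e.
have Ll' := Ll; case: Ll' => a [b [c [nz hl]]].
have e13 := par_height nz hl Ld1 pl1 d1P1 d1P3.
have e24 := par_height nz hl Ld2 pl2 d2P2 d2P4.
set k1 := a * P1.1 + b * P1.2 in e13.
set k2 := a * P2.1 + b * P2.2 in e24.
have ne : k1 != k2.
  apply/negP => /eqP ek.
  have P12 : P1 = P2.
    case: (classic (P1 = P2)) => // ne'.
    by case: nB; apply: (height_par nz hl LB BP1 BP2 ne').
  have P14 : P1 = P4.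
    case: (classic (P1 = P4)) => // ne'.
    case: nA; apply: (height_par nz hl LA AP1 AP4 ne').
    by rewrite -/k1 ek e24.
  by rewrite -P12 in A'P2; rewrite -P14 in B'P4; apply: nc; exists P1.
have hP1 : a * P1.1 + b * P1.2 = k1 by [].
have hP2 : a * P2.1 + b * P2.2 = k2 by [].
have hP3 : a * P3.1 + b * P3.2 = k1 by rewrite -e13.
have hP4 : a * P4.1 + b * P4.2 = k2 by rewrite -e24.
set t := (c - k1) / (k2 - k1).
split => // -[nlA [nlA' _]] [nlB [nlB' _]] m1 m2 h1 h2.
rewrite (mid_at Ll LA LA' nlA nlA' (x := aff P1 P4 t) (y := aff P3 P2 t) _ _ _ _ h1);
  [| by apply/hl; apply: haff | exact: aff_on | by apply/hl; apply: haff | exact: aff_on].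
rewrite (mid_at Ll LB LB' nlB nlB' (x := aff P1 P2 t) (y := aff P3 P4 t) _ _ _ _ h2);
  [| by apply/hl; apply: haff | exact: aff_on | by apply/hl; apply: haff | exact: aff_on].
by rewrite /midpt /aff /=; congr (Some (_, _)); ring.
Qed.

Lemma bis_swapP (K : fieldType) (A B A' B' l : pt K -> Prop) :
  bisects A B A' B' l -> bisects B A B' A' l.
Proof. by case=> Ll h; split => // cB cA m1 m2 h1 h2; symmetry; apply: h. Qed.

Lemma single_par (K : fieldType) (X Y Z W l1 l2 : pt K -> Prop) :
  is_line l1 -> is_line l2 -> is_line X -> is_line Y -> is_line Z -> is_line W ->
  bisects X Z Y W l1 -> bisects X Z Y W l2 -> ~ eql l1 l2 -> par l1 l2 ->
  par l1 X -> ~ par l1 Y -> ~ par X Z -> ~ par X W -> False.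
Proof.
move=> L1 L2 LX LY LZ LW b1 b2 ne12 p12 p1X n1Y nXZ nXW.
have gen : forall li, is_line li -> par l1 li -> ~ eql li X -> bisects X Z Y W li -> False.
  move=> li Li p1i niX [_ hb].
  have piX : par li X by apply: (par_trans Li L1 LX) => //; apply: par_sym.
  have niY : ~ par li Y by move=> piY; apply: n1Y; apply: par_trans p1i piY.
  have niZ : ~ par li Z by apply: adj_npar piX nXZ.
  have niW : ~ par li W by apply: adj_npar piX nXW.
  have cX : crosses li X Y by split => //; split; [exact: npar_neql | case].
  have [p hp] := mid_some niZ niW.
  by have := hb cX (crosses_npar niZ niW) None (Some p) (or_introl (conj (or_introl piX) erefl)) hp.
case: (classic (eql l1 X)) => e1.
  apply: (gen l2 L2 p12) => // e2; apply: ne12; apply: eql_trans e1 _; exact: eql_sym.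
exact: (gen l1 L1 (par_refl _)).
Qed.

Lemma bis_sums (K : fieldType) (h2 : (2 : K) != 0) (A B A' B' l : pt K -> Prop) xA xA' xB xB' :
  bisects A B A' B' l -> ~ par l A -> ~ par l A' -> ~ par l B -> ~ par l B' ->
  l xA -> A xA -> l xA' -> A' xA' -> l xB -> B xB -> l xB' -> B' xB' ->
  xA.1 + xA'.1 = xB.1 + xB'.1 /\ xA.2 + xA'.2 = xB.2 + xB'.2.
Proof.
move=> [_ hb] nA nA' nB nB' lA AA lA' AA' lB BB lB' BB'.
have := hb (crosses_npar nA nA') (crosses_npar nB nB') _ _
  (mid_exact nA nA' lA AA lA' AA') (mid_exact nB nB' lB BB lB' BB').
move=> /(congr1 (fun o => if o is Some z then z else xA)) /=.
exact: midpt_eq.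
Qed.

Lemma diag3 (K : fieldType) (h2 : (2 : K) != 0) (A B A' B' : pt K -> Prop)
  (hQ : quadrilateral A B A' B') l1 l2 :
  is_line l1 -> is_line l2 -> ~ eql l1 l2 -> par l1 l2 ->
  bisects A B A' B' l1 -> bisects A B A' B' l2 ->
  ~ par l1 A -> ~ par l1 A' -> ~ par l1 B -> ~ par l1 B' ->
  exists d1 d2, diag1 A B A' B' d1 /\ diag2 A B A' B' d2 /\ par d1 d2 /\ par l1 d1.
Proof.
have hQ' := hQ.
case: hQ' => [[LA LB LA' LB'] [[nAB [nAA' [nAB' [nBA' [nBB' nA'B']]]]] [nc [pAB pBA' pA'B' pB'A]]]].
move=> L1 L2 ne12 p12 b1 b2 n1A n1A' n1B n1B'.
have L1' := L1; case: L1' => a [b [c1 [nz hl1]]].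
have [y0 ly0] := line_pt L2.
set c2 := a * y0.1 + b * y0.2.
have hl2 : forall p, l2 p <-> lin a b c2 p.
  move=> p; split; first by move=> lp; rewrite /lin /c2; apply: (par_height nz hl1 L2 p12 lp ly0).
  have pL : par l2 (lin a b c2).
    by apply: (par_trans L2 L1 (lin_line c2 nz)); [apply: par_sym | apply: par_lin nz hl1].
  have E := par_eql pL ly0 (erefl c2 : lin a b c2 y0).
  exact: (proj2 (E p)).
have ne : c1 != c2.
  apply/negP => /eqP ec; apply: ne12 => p; rewrite hl1 hl2 /lin ec; tauto.
have n2 : forall S, is_line S -> ~ par l1 S -> ~ par l2 S.
  by move=> S LS n1S p2S; apply: n1S; apply: par_trans p12 p2S.
have [xA [lxA AxA]] := meet n1A; have [xA' [lxA' A'xA']] := meet n1A'.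
have [xB [lxB BxB]] := meet n1B; have [xB' [lxB' B'xB']] := meet n1B'.
have [yA [lyA AyA]] := meet (n2 _ LA n1A); have [yA' [lyA' A'yA']] := meet (n2 _ LA' n1A').
have [yB [lyB ByB]] := meet (n2 _ LB n1B); have [yB' [lyB' B'yB']] := meet (n2 _ LB' n1B').
have [ex1 ex2] := bis_sums h2 b1 n1A n1A' n1B n1B' lxA AxA lxA' A'xA' lxB BxB lxB' B'xB'.
have [ey1 ey2] := bis_sums h2 b2 (n2 _ LA n1A) (n2 _ LA' n1A') (n2 _ LB n1B) (n2 _ LB' n1B')
  lyA AyA lyA' A'yA' lyB ByB lyB' B'yB'.
move/hl1: lxA => hxA; move/hl1: lxA' => hxA'; move/hl1: lxB => hxB; move/hl1: lxB' => hxB'.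
move/hl2: lyA => hyA; move/hl2: lyA' => hyA'; move/hl2: lyB => hyB; move/hl2: lyB' => hyB'.
have nlin : forall k S, is_line S -> ~ par l1 S -> ~ par S (lin a b k).
  move=> k S LS n1S pS; apply: n1S.
  apply: (par_trans L1 (lin_line k nz) LS); [exact: par_lin nz hl1 | exact: par_sym].
have [P1 [AP1 BP1]] := meet pAB.
have [q [A'q [B'q hq]]] := level_lemma (k := a * P1.1 + b * P1.2) nz LA LA' LB LB'
  (nlin _ _ LA n1A) (nlin _ _ LB n1B) AxA A'xA' BxB B'xB' AyA A'yA' ByB B'yB'
  hxA hxA' hxB hxB' hyA hyA' hyB hyB' ex1 ex2 ey1 ey2 ne AP1 BP1 (erefl _).
have [P2 [BP2 A'P2]] := meet pBA'.
have [q' [Aq' [B'q' hq']]] := level_lemma (k := a * P2.1 + b * P2.2) nz LA' LA LB LB'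
  (nlin _ _ LA' n1A') (nlin _ _ LB n1B) A'xA' AxA BxB B'xB' A'yA' AyA ByB B'yB'
  hxA' hxA hxB hxB' hyA' hyA hyB hyB' (etrans (addrC _ _) ex1) (etrans (addrC _ _) ex2)
  (etrans (addrC _ _) ey1) (etrans (addrC _ _) ey2) ne A'P2 BP2 (erefl _).
exists (lin a b (a * P1.1 + b * P1.2)), (lin a b (a * P2.1 + b * P2.2)).
split; first by split; [exact: lin_line | exists P1, q].
split; first by split; [exact: lin_line | exists P2, q'].
split; last exact: par_lin nz hl1.
exact: (@par_lin K (lin a b (a * P1.1 + b * P1.2)) a b (a * P1.1 + b * P1.2) _ nz (fun p => iff_refl _)).
Qed.

Lemma part4 (K : fieldType) (A B A' B' : pt K -> Prop) (hQ : quadrilateral A B A' B') l :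
  is_line l -> special_dir A B A' B' l -> bisects A B A' B' l.
Proof.
have hQ' := hQ.
case: hQ' => [[LA LB LA' LB'] [[nAB [nAA' [nAB' [nBA' [nBB' nA'B']]]]] [nc [pAB pBA' pA'B' pB'A]]]].
move=> Ll [[pAA' plA] | [[pBB' plB] | [d1 [d2 [hd1 [hd2 [p12 pl]]]]]]].
- split => // cA; exfalso; apply: cA.2.2; split => //; exact: par_trans plA pAA'.
- split => // _ cB; exfalso; apply: cB.2.2; split => //; exact: par_trans plB pBB'.
- exact: diag4 hd1 hd2 p12 Ll pl.
Qed.

Lemma dir3 (K : fieldType) (h2 : (2 : K) != 0) (A B A' B' : pt K -> Prop)
  (hQ : quadrilateral A B A' B') l1 l2 :
  is_line l1 -> is_line l2 -> ~ eql l1 l2 -> par l1 l2 ->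
  bisects A B A' B' l1 -> bisects A B A' B' l2 -> special_dir A B A' B' l1.
Proof.
have hQ' := hQ.
case: hQ' => [[LA LB LA' LB'] [[nAB [nAA' [nAB' [nBA' [nBB' nA'B']]]]] [nc [pAB pBA' pA'B' pB'A]]]].
move=> L1 L2 ne12 p12 b1 b2; rewrite /special_dir.
have sy : forall X Y : pt K -> Prop, ~ par Y X -> ~ par X Y by move=> X Y h /par_sym.
case: (classic (par l1 A)) => pA.
  case: (classic (par l1 A')) => pA'.
    by left; split => //; apply: (par_trans LA L1 LA' (par_sym pA) pA').
  by exfalso; apply: (single_par L1 L2 LA LA' LB LB' b1 b2 ne12 p12 pA pA' pAB (sy _ _ pB'A)).
case: (classic (par l1 A')) => pA'.
  by exfalso; apply: (single_par L1 L2 LA' LA LB LB' (bis_swapA b1) (bis_swapA b2) ne12 p12 pA' pA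
    (sy _ _ pBA') pA'B').
case: (classic (par l1 B)) => pB.
  case: (classic (par l1 B')) => pB'.
    by right; left; split => //; apply: (par_trans LB L1 LB' (par_sym pB) pB').
  by exfalso; apply: (single_par L1 L2 LB LB' LA LA' (bis_swapP b1) (bis_swapP b2) ne12 p12 pB pB'
    (sy _ _ pAB) pBA').
case: (classic (par l1 B')) => pB'.
  by exfalso; apply: (single_par L1 L2 LB' LB LA LA' (bis_swapA (bis_swapP b1)) (bis_swapA (bis_swapP b2))
    ne12 p12 pB' pB pB'A (sy _ _ pA'B')).
by right; right; apply: (diag3 h2 hQ L1 L2 ne12 p12 b1 b2).
Qed.

Theorem proposition3p2 (K : fieldType) (h2 : (2 : K) != 0)
  (A B A' B' : pt K -> Prop) (hQ : quadrilateral A B A' B') :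
  (* (1) *)
  (forall l, bisects A B A' B' l -> exists p : pt K, midQ A B A' B' l (Some p)) /\
  (* (2) *)
  (forall l, is_line l -> (exists v, is_vertex A B A' B' v /\ l v) ->
     (bisects A B A' B' l <-> is_side A B A' B' l \/ is_diagonal A B A' B' l)) /\
  (* (3) *)
  (forall l1 l2, is_line l1 -> is_line l2 -> ~ eql l1 l2 -> par l1 l2 ->
     (bisects A B A' B' l1 /\ bisects A B A' B' l2 <->
      special_dir A B A' B' l1 /\ special_dir A B A' B' l2)) /\
  (* (4) *)
  (forall l, is_line l -> special_dir A B A' B' l -> bisects A B A' B' l).
Proof.
have hQ' := hQ.
case: hQ' => [[LA LB LA' LB'] [[nAB [nAA' [nAB' [nBA' [nBB' nA'B']]]]] [nc [pAB pBA' pA'B' pB'A]]]].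
split.
  move=> l bl; have Ll := bl.1.
  case: (classic (par l A \/ par l A')) => hp.
    have [nB nB'] : ~ par l B /\ ~ par l B'.
      case: hp => p; split.
      - exact: adj_npar Ll LA LB p pAB.
      - by apply: adj_npar Ll LA LB' p _ => h; apply: pB'A; apply: par_sym.
      - by apply: adj_npar Ll LA' LB p _ => h; apply: pBA'; apply: par_sym.
      - exact: adj_npar Ll LA' LB' p pA'B'.
    have [p hm] := mid_some nB nB'.
    by exists p; split => //; right; split => //; apply: crosses_npar.
  have nA : ~ par l A by move=> h; apply: hp; left.
  have nA' : ~ par l A' by move=> h; apply: hp; right.
  have [p hm] := mid_some nA nA'.
  by exists p; split => //; left; split => //; apply: crosses_npar.
split.
  move=> l Ll [v [hv lv]]; split.
    move=> bl; case: (classic (is_side A B A' B' l)) => hs; [by left | right; rewrite /is_diagonal].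
    have nA : ~ eql l A by move=> e; apply: hs; rewrite /is_side; left.
    have nB : ~ eql l B by move=> e; apply: hs; rewrite /is_side; right; left.
    have nA' : ~ eql l A' by move=> e; apply: hs; rewrite /is_side; right; right; left.
    have nB' : ~ eql l B' by move=> e; apply: hs; rewrite /is_side; right; right; right.
    case: hv => [[Av Bv]|[[Bv A'v]|[[A'v B'v]|[B'v Av]]]].
    - have [q [A'q [B'q lq]]] := vertex_gen h2 Ll LA LA' LB LB' lv Av Bv nA nB nA' nB' pA'B' bl.
      by left; split => //; exists v, q.
    - have [q [Aq [B'q lq]]] := vertex_gen h2 Ll LA' LA LB LB' lv A'v Bv nA' nB nA nB'
        (fun h => pB'A (par_sym h)) (bis_swapA bl).
      by right; split => //; exists v, q.
    - have [q [Aq [Bq lq]]] := vertex_gen h2 Ll LA' LA LB' LB lv A'v B'v nA' nB' nA nB pAB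
        (bis_swapB (bis_swapA bl)).
      by left; split => //; exists q, v.
    - have [q [A'q [Bq lq]]] := vertex_gen h2 Ll LA LA' LB' LB lv Av B'v nA nB' nA' nB
        (fun h => pBA' (par_sym h)) (bis_swapB bl).
      by right; split => //; exists q, v.
  case=> [hs | hd].
    split => // cA cB; exfalso.
    case: hs => [e|[e|[e|e]]].
    - exact: cA.1 e.
    - exact: cB.1 e.
    - exact: cA.2.1 e.
    - exact: cB.2.1 e.
  case: hd => [[_ [p [q [Ap [Bp [A'q [B'q [lp lq]]]]]]]] | [_ [p [q [Bp [A'p [B'q [Aq [lp lq]]]]]]]]].
    exact: diag_bis Ll LA LA' LB LB' Ap Bp lp A'q B'q lq.
  exact: bis_swapA (diag_bis Ll LA' LA LB LB' A'p Bp lp Aq B'q lq).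
split.
  move=> l1 l2 L1 L2 ne p12; split.
    case=> b1 b2; split; first exact: (dir3 h2 hQ L1 L2 ne p12 b1 b2).
    have ne' : ~ eql l2 l1 by move=> e; apply: ne; apply: eql_sym.
    exact: (dir3 h2 hQ L2 L1 ne' (par_sym p12) b2 b1).
  by case=> s1 s2; split; apply: part4.
exact: part4.
Qed.
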